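(* Let $(f_n):\underline G=(G_n,p_n)\to\underline H=(H_n,q_n)$ be a level morphism of inverse sequences of groups such that the induced map $\tilde f:\varprojlim\underline G\to\varprojlim\underline H$, $\tilde f((g_n))=(f_n(g_n))$, is an isomorphism of groups. If $\tilde f$ is open (with respect to the inverse limit topologies, each $G_n$, $H_n$ discrete) and $\underline G$ is Mittag-Leffler, then the morphism $\underline f:\underline G\to\underline H$ of \textbf{Tower-Grp} determined by $(f_n)$ is a monomorphism in \textbf{Tower-Grp}.
   Context: A level morphism $(f_n)$ consists of homomorphisms $f_n:G_n\to H_n$ with $f_n\circ p_n=q_n\circ f_{n+1}$ for all $n$ (i.e. $\Phi=\mathrm{id}$). $p_{nm}=p_n\circ\cdots\circ p_{m-1}$; Mittag-Leffler: for every $n_0$ there is $n_1>n_0$ with $p_{n_0n}(G_n)=p_{n_0n_1}(G_{n_1})$ for all $n>n_1$. \textbf{Tower-Grp}: objects inverse sequences of groups; morphisms $(f_n,\Phi)$ with $\Phi:\mathbb{N}\to\mathbb{N}$, homomorphisms $f_n:G_{\Phi(n)}\to H_n$ such that for all $n'>n$ there is $m\ge\Phi(n),\Phi(n')$ with $f_n\circ p_{\Phi(n)m}=q_{nn'}\circ f_{n'}\circ p_{\Phi(n')m}$, modulo the relation: $(f_n,\Phi)\sim(g_n,\Psi)$ if every $n$ admits $m\ge\Phi(n),\Psi(n)$ with $f_n\circ p_{\Phi(n)m}=g_n\circ p_{\Psi(n)m}$. A monomorphism is a morphism $u$ with $u\circ a=u\circ b\Rightarrow a=b$. *)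

(* Defs.v *)
From Stdlib Require Import Arith.




Record group := Group {
  gcar :> Type;
  gmul : gcar -> gcar -> gcar;
  ginv : gcar -> gcar;
  gone : gcar;
  gmulA : forall x y z, gmul x (gmul y z) = gmul (gmul x y) z;
  gmul1l : forall x, gmul gone x = x;
  gmulVl : forall x, gmul (ginv x) x = gone
}.
Arguments gmul {g} _ _.
Arguments ginv {g} _.


Definition is_hom {G H : group} (f : G -> H) : Prop :=
  forall x y, f (gmul x y) = gmul (f x) (f y).

Record tower := Tower {
  tG : nat -> group;
  tp : forall n, tG (S n) -> tG n;
  tp_hom : forall n, is_hom (tp n)
}.

(* p_{nm} = p_n o ... o p_{m-1} : G_m -> G_n  (meaningful for n <= m;
   for n > m it returns the junk value 1, and it is only ever used with n <= m) *)
Fixpoint pnm (T : tower) (n m : nat) {struct m} : tG T m -> tG T n :=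
  match m as m0 return tG T m0 -> tG T n with
  | 0 => match Nat.eq_dec n 0 with
         | left e => fun x => eq_rect_r (tG T) x e
         | right _ => fun _ => gone (tG T n)
         end
  | S m' => match Nat.eq_dec n (S m') with
            | left e => fun x => eq_rect_r (tG T) x e
            | right _ => fun x => @pnm T n m' (tp T m' x)
            end
  end.

Definition mittag_leffler (T : tower) : Prop :=
  forall n0, exists n1, n0 < n1 /\
    forall n, n1 < n ->
      forall y : tG T n0,
        (exists x : tG T n, pnm T n0 n x = y) <->
        (exists x : tG T n1, pnm T n0 n1 x = y).

Definition level_mor (G H : tower) (f : forall n, tG G n -> tG H n) : Prop :=
  (forall n, is_hom (f n)) /\
  (forall n (x : tG G (S n)), f n (tp G n x) = tp H n (f (S n) x)).

Definition limit (T : tower) :=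
  { g : forall n, tG T n | forall n, tp T n (g (S n)) = g n }.

Lemma lim_map_proof {G H : tower} {f : forall n, tG G n -> tG H n}
  (hf : level_mor G H f) (g : limit G) :
  forall n, tp H n (f (S n) (proj1_sig g (S n))) = f n (proj1_sig g n).
Proof.
  intro n. destruct hf as [_ hc]. rewrite <- hc.
  now rewrite (proj2_sig g n).
Qed.

Definition lim_map {G H : tower} {f : forall n, tG G n -> tG H n}
  (hf : level_mor G H f) (g : limit G) : limit H :=
  exist _ (fun n => f n (proj1_sig g n)) (lim_map_proof hf g).

Definition bijective_map {A B : Type} (h : A -> B) : Prop :=
  (forall x y, h x = h y -> x = y) /\ (forall y, exists x, h x = y).

(* Inverse-limit topology: subspace topology of the product of the discrete
   spaces G_n; a basis consists of the cylinders fixing finitely many (w.l.o.g.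
   the first n+1) coordinates. *)
Definition lim_open {T : tower} (A : limit T -> Prop) : Prop :=
  forall x, A x -> exists n, forall y : limit T,
    (forall k, k <= n -> proj1_sig y k = proj1_sig x k) -> A y.

Definition open_map {G H : tower} (h : limit G -> limit H) : Prop :=
  forall A, lim_open A -> lim_open (fun y => exists x, A x /\ h x = y).

Record tmor (G H : tower) := TMor {
  tphi : nat -> nat;
  tf : forall n, tG G (tphi n) -> tG H n
}.
Arguments tphi {G H} t n.
Arguments tf {G H} t n _.

Definition is_tmor {G H : tower} (u : tmor G H) : Prop :=
  (forall n, is_hom (tf u n)) /\
  (forall n n', n < n' -> exists m, tphi u n <= m /\ tphi u n' <= m /\
     forall x : tG G m,
       tf u n (pnm G (tphi u n) m x) = pnm H n n' (tf u n' (pnm G (tphi u n') m x))).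

(* the equivalence relation defining morphisms of Tower-Grp *)
Definition tequiv {G H : tower} (u v : tmor G H) : Prop :=
  forall n, exists m, tphi u n <= m /\ tphi v n <= m /\
    forall x : tG G m,
      tf u n (pnm G (tphi u n) m x) = tf v n (pnm G (tphi v n) m x).

Definition tcomp {K G H : tower} (u : tmor G H) (a : tmor K G) : tmor K H :=
  @TMor K H (fun n => tphi a (tphi u n))
            (fun n x => tf u n (tf a (tphi u n) x)).

Definition tower_mono {G H : tower} (u : tmor G H) : Prop :=
  forall (K : tower) (a b : tmor K G), is_tmor a -> is_tmor b ->
    tequiv (tcomp u a) (tcomp u b) -> tequiv a b.

Definition level_tmor {G H : tower} (f : forall n, tG G n -> tG H n) : tmor G H :=
  @TMor G H (fun n => n) f.

(* Main.v *)
Require Import Defs.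
From Stdlib Require Import Arith Lia Eqdep_dec ClassicalEpsilon.

Lemma gcancel (G : group) (a x y : G) : gmul a x = gmul a y -> x = y.
Proof.
  intro h. rewrite <- (gmul1l G x), <- (gmul1l G y), <- (gmulVl G a).
  rewrite <- !gmulA, h. reflexivity.
Qed.

Lemma gmulVr (G : group) (x : G) : gmul x (ginv x) = gone G.
Proof.
  rewrite <- (gmul1l G (gmul x (ginv x))).
  rewrite <- (gmulVl G (ginv x)) at 1.
  rewrite <- gmulA, (gmulA _ (ginv x)), gmulVl, gmul1l, gmulVl. reflexivity.
Qed.

Lemma gmul1r (G : group) (x : G) : gmul x (gone G) = x.
Proof. rewrite <- (gmulVl G x), gmulA, gmulVr, gmul1l. reflexivity. Qed.

Lemma ginv_uniq (G : group) (u x : G) : gmul u x = gone G -> u = ginv x.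
Proof.
  intro h. rewrite <- (gmul1r G u), <- (gmulVr G x), gmulA, h, gmul1l. reflexivity.
Qed.

Lemma hom1 (G H : group) (f : G -> H) : is_hom f -> f (gone G) = gone H.
Proof.
  intro hf. apply (gcancel H (f (gone G))).
  rewrite <- hf, gmul1l, gmul1r. reflexivity.
Qed.

Lemma homV (G H : group) (f : G -> H) : is_hom f -> forall x, f (ginv x) = ginv (f x).
Proof.
  intros hf x. apply ginv_uniq. rewrite <- hf, gmulVl. apply hom1; auto.
Qed.

Lemma eq_of_div (G : group) (u v : G) : gmul u (ginv v) = gone G -> u = v.
Proof.
  intro h. rewrite <- (gmul1r G u), <- (gmulVl G v), gmulA, h, gmul1l. reflexivity.
Qed.

Lemma pnm_refl (T : tower) n (x : tG T n) : pnm T n n x = x.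
Proof.
  destruct n; cbn [pnm].
  - destruct (Nat.eq_dec 0 0) as [e|ne]; [|congruence].
    rewrite (UIP_refl_nat _ e). reflexivity.
  - destruct (Nat.eq_dec (S n) (S n)) as [e|ne]; [|congruence].
    rewrite (UIP_refl_nat _ e). reflexivity.
Qed.

Lemma pnm_S (T : tower) n m (x : tG T (S m)) : n <= m ->
  pnm T n (S m) x = pnm T n m (tp T m x).
Proof.
  intro h. cbn [pnm]. destruct (Nat.eq_dec n (S m)); [lia|reflexivity].
Qed.

Lemma pnm_comp (T : tower) i j k (x : tG T k) : i <= j -> j <= k ->
  pnm T i j (pnm T j k x) = pnm T i k x.
Proof.
  intros hij hjk. induction k.
  - assert (j = 0) by lia. subst. rewrite pnm_refl. reflexivity.
  - destruct (Nat.eq_dec j (S k)).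
    + subst. rewrite pnm_refl. reflexivity.
    + rewrite (pnm_S T j k), (pnm_S T i k) by lia.
      apply IHk; lia.
Qed.

Lemma pnm_hom (T : tower) i k : i <= k -> is_hom (pnm T i k).
Proof.
  intro h. induction k; intros x y.
  - assert (i = 0) by lia. subst. rewrite !pnm_refl. reflexivity.
  - destruct (Nat.eq_dec i (S k)).
    + subst. rewrite !pnm_refl. reflexivity.
    + rewrite !(pnm_S T i k) by lia. rewrite (tp_hom T). apply IHk; lia.
Qed.

Lemma tp_pnm (T : tower) k m (z : tG T (S m)) : k <= m ->
  tp T k (pnm T (S k) (S m) z) = pnm T k m (tp T m z).
Proof.
  intro h.
  assert (E : forall w, tp T k w = pnm T k (S k) w).
  { intro w. rewrite pnm_S by lia. rewrite pnm_refl. reflexivity. }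
  rewrite E, pnm_comp by lia. apply pnm_S; lia.
Qed.

Lemma lim_proj (T : tower) (g : limit T) k N : k <= N ->
  pnm T k N (proj1_sig g N) = proj1_sig g k.
Proof.
  intro h. induction N.
  - assert (k = 0) by lia. subst. apply pnm_refl.
  - destruct (Nat.eq_dec k (S N)).
    + subst. apply pnm_refl.
    + rewrite pnm_S by lia. rewrite (proj2_sig g N). apply IHN; lia.
Qed.

Lemma level_pnm (G H : tower) f (hf : level_mor G H f) k N (x : tG G N) : k <= N ->
  f k (pnm G k N x) = pnm H k N (f N x).
Proof.
  intro h. induction N.
  - assert (k = 0) by lia. subst. rewrite !pnm_refl. reflexivity.
  - destruct (Nat.eq_dec k (S N)).
    + subst. rewrite !pnm_refl. reflexivity.
    + rewrite !pnm_S by lia. rewrite IHN by lia. rewrite (proj2 hf). reflexivity.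
Qed.

Definition Simg (T : tower) k (y : tG T k) : Prop :=
  forall M, k <= M -> exists x : tG T M, pnm T k M x = y.

Lemma img_mono (T : tower) k M1 M2 (y : tG T k) : k <= M1 -> M1 <= M2 ->
  (exists x : tG T M2, pnm T k M2 x = y) -> exists x : tG T M1, pnm T k M1 x = y.
Proof.
  intros h1 h2 [x hx]. exists (pnm T M1 M2 x). rewrite pnm_comp by lia. exact hx.
Qed.

Lemma img_Simg (T : tower) k n1 (y : tG T k) : k < n1 ->
  (forall n, n1 < n -> forall y : tG T k,
        (exists x : tG T n, pnm T k n x = y) <-> (exists x : tG T n1, pnm T k n1 x = y)) ->
  (exists x : tG T n1, pnm T k n1 x = y) -> Simg T k y.
Proof.
  intros hk hml hy M hM. destruct (le_lt_dec M n1).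
  - apply (img_mono T k M n1); auto.
  - apply (hml M); auto.
Qed.

Lemma step_ex (T : tower) : mittag_leffler T -> forall k (y : tG T k), Simg T k y ->
  exists z : tG T (S k), Simg T (S k) z /\ tp T k z = y.
Proof.
  intros ml k y hy.
  destruct (ml (S k)) as [n1 [hn1 hml]].
  destruct (hy n1) as [x hx]; [lia|].
  exists (pnm T (S k) n1 x). split.
  - apply (img_Simg T (S k) n1); auto. exists x; reflexivity.
  - rewrite <- hx. rewrite <- (pnm_comp T k (S k) n1) by lia.
    rewrite pnm_S by lia. rewrite pnm_refl. reflexivity.
Qed.

Definition lift_seq (T : tower)
  (step : forall k (y : tG T k), Simg T k y ->
          {z : tG T (S k) | Simg T (S k) z /\ tp T k z = y})
  N (y : tG T N) (Hy : Simg T N y) : forall i, {z : tG T (i + N) | Simg T (i + N) z} :=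
  fix h i := match i as i0 return {z : tG T (i0 + N) | Simg T (i0 + N) z} with
  | 0 => exist _ y Hy
  | S i' => let w := h i' in
            let s := step _ (proj1_sig w) (proj2_sig w) in
            exist _ (proj1_sig s) (proj1 (proj2_sig s))
  end.

Lemma lift_seq_S T step N y Hy i :
  tp T (i + N) (proj1_sig (lift_seq T step N y Hy (S i))) = proj1_sig (lift_seq T step N y Hy i).
Proof.
  simpl. exact (proj2 (proj2_sig (step _ _ _))).
Qed.

Lemma lift_seq_N T step N y Hy i :
  pnm T N (i + N) (proj1_sig (lift_seq T step N y Hy i)) = y.
Proof.
  induction i.
  - apply pnm_refl.
  - change (S i + N) with (S (i + N)). rewrite pnm_S by lia.
    rewrite lift_seq_S. exact IHi.
Qed.

Lemma lift (T : tower) : mittag_leffler T -> forall N (y : tG T N), Simg T N y ->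
  exists g : limit T, proj1_sig g N = y.
Proof.
  intros ml N y Hy.
  pose (step := fun k y hy => constructive_indefinite_description _ (step_ex T ml k y hy)).
  pose (h := lift_seq T step N y Hy).
  assert (Hc : forall k, tp T k (pnm T (S k) (S k + N) (proj1_sig (h (S k)))) =
                         pnm T k (k + N) (proj1_sig (h k))).
  { intro k. change (S k + N) with (S (k + N)). rewrite tp_pnm by lia.
    unfold h. rewrite lift_seq_S. reflexivity. }
  exists (exist _ (fun k => pnm T k (k + N) (proj1_sig (h k))) Hc).
  simpl. rewrite <- (lift_seq_N T step N y Hy N).
  unfold h. reflexivity.
Qed.

Theorem proposition8p13 (G H : tower) (f : forall n, tG G n -> tG H n)
  (hf : level_mor G H f) :
  bijective_map (lim_map hf) ->
  open_map (lim_map hf) ->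
  mittag_leffler G ->
  tower_mono (level_tmor f).
Proof.
  intros [hinj _] hopen ml K a b ha hb heq n.
  assert (one_c : forall k, tp G k (gone (tG G (S k))) = gone (tG G k)).
  { intro k. apply hom1, tp_hom. }
  pose (one := exist _ (fun k => gone (tG G k)) one_c : limit G).
  pose (U := fun g : limit G => forall k, k <= n -> proj1_sig g k = gone (tG G k)).
  assert (hU : lim_open U).
  { intros x hx. exists n. intros y hy k hk. rewrite hy by exact hk. apply hx, hk. }
  destruct (hopen U hU (lim_map hf one)) as [N0 HN0].
  { exists one. split; [intros k _; reflexivity|reflexivity]. }
  set (N := N0 + S n).
  assert (Key : forall g : limit G, f N (proj1_sig g N) = gone (tG H N) ->
                 proj1_sig g n = gone (tG G n)).
  { intros g hg.
    destruct (HN0 (lim_map hf g)) as [x [hx e]].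
    { intros k hk. simpl. rewrite <- (lim_proj G g k N) by lia.
      rewrite (level_pnm G H f hf) by lia. rewrite hg.
      rewrite hom1 by (apply pnm_hom; lia). rewrite hom1 by apply (proj1 hf).
      reflexivity. }
    apply hinj in e. subst x. apply hx. lia. }
  destruct (ml N) as [n1 [hn1 hml]].
  set (M := S n1).
  destruct ha as [ahom acomp]. destruct hb as [bhom bcomp].
  destruct (acomp n N) as [ma1 [ha11 [ha12 ha1]]]; [lia|].
  destruct (acomp N M) as [ma2 [ha21 [ha22 ha2]]]; [unfold M; lia|].
  destruct (bcomp n N) as [mb1 [hb11 [hb12 hb1]]]; [lia|].
  destruct (bcomp N M) as [mb2 [hb21 [hb22 hb2]]]; [unfold M; lia|].
  destruct (heq N) as [m3 [h31 [h32 h3]]]. simpl in h31, h32, h3.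
  set (m := ma1 + ma2 + mb1 + mb2 + m3).
  exists m. simpl. split; [lia|]. split; [lia|]. intro x.
  assert (P : forall i j, i <= j -> j <= m -> pnm K i m x = pnm K i j (pnm K j m x)).
  { intros i j hi hj. rewrite pnm_comp; auto. }
  set (u := tf a N (pnm K (tphi a N) m x)).
  set (v := tf b N (pnm K (tphi b N) m x)).
  assert (Ea : tf a n (pnm K (tphi a n) m x) = pnm G n N u).
  { unfold u. rewrite (P (tphi a n) ma1), (P (tphi a N) ma1) by lia. apply ha1. }
  assert (Eb : tf b n (pnm K (tphi b n) m x) = pnm G n N v).
  { unfold v. rewrite (P (tphi b n) mb1), (P (tphi b N) mb1) by lia. apply hb1. }
  assert (Eu : u = pnm G N M (tf a M (pnm K (tphi a M) m x))).
  { unfold u. rewrite (P (tphi a N) ma2), (P (tphi a M) ma2) by lia. apply ha2. }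
  assert (Ev : v = pnm G N M (tf b M (pnm K (tphi b M) m x))).
  { unfold v. rewrite (P (tphi b N) mb2), (P (tphi b M) mb2) by lia. apply hb2. }
  assert (Ef : f N u = f N v).
  { unfold u, v. rewrite (P (tphi a N) m3), (P (tphi b N) m3) by lia. apply h3. }
  set (g := gmul u (ginv v)).
  assert (Sg : Simg G N g).
  { apply (img_Simg G N n1); auto.
    apply (hml M); [unfold M; lia|].
    exists (gmul (tf a M (pnm K (tphi a M) m x)) (ginv (tf b M (pnm K (tphi b M) m x)))).
    unfold g. rewrite Eu, Ev. rewrite (pnm_hom G N M) by (unfold M; lia).
    rewrite homV by (apply pnm_hom; unfold M; lia). reflexivity. }
  destruct (lift G ml N g Sg) as [gh hgh].
  assert (hg1 : f N g = gone (tG H N)).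
  { unfold g. rewrite (proj1 hf), homV by apply (proj1 hf). rewrite Ef. apply gmulVr. }
  rewrite <- hgh in hg1. apply Key in hg1.
  rewrite <- (lim_proj G gh n N), hgh in hg1 by lia.
  rewrite Ea, Eb. apply eq_of_div.
  unfold g in hg1. rewrite (pnm_hom G n N), homV in hg1 by (try apply pnm_hom; lia).
  exact hg1.
Qed.
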